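(* Let $D$ be a demicap in $AG(4,3)$ with anchor point $a$. Then among the $71$ points of $AG(4,3)\setminus D$: the anchor point $a$ completes exactly five lines with pairs of points of $D$; exactly $40$ points complete exactly one line with a pair of points of $D$; and the remaining $30$ points complete no line with a pair of points of $D$.
   Context: $AG(4,3)$ is the affine space $\mathbb{F}_3^4$; a line is a set of three distinct points $\{x,y,z\}$ with $x+y+z=0$. A cap is a set of points containing no line. A hyperplane is a $3$-dimensional affine subspace of $\mathbb{F}_3^4$; a set of points is co-hyperplanar if it lies in a common hyperplane. For a point $a$, an $a$-line is a pair of points $\{b,c\}$ such that $\{a,b,c\}$ is a line. A demicap with anchor point $a$ is a cap consisting of the $10$ points of five $a$-lines such that no four of these five $a$-lines are co-hyperplanar. For a set $S$ and a point $p\notin S$, $p$ completes a line with a pair of points of $S$ if there are distinct $x,y\in S$ with $\{p,x,y\}$ a line; the number of lines $p$ completes with $S$ is the number of such unordered pairs $\{x,y\}$. *)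

(* Defs.v *)
From HB Require Import structures.
From mathcomp Require Import all_boot all_order all_algebra.
Set Implicit Arguments. Unset Strict Implicit. Unset Printing Implicit Defensive.
Import GRing.Theory.
Local Open Scope ring_scope.

(* Points of AG(4,3) = F_3^4, as row vectors. *)
Definition point := 'rV['F_3]_4.

Definition is_line (L : {set point}) : bool :=
  (#|L| == 3)%N &&
  [exists x : point, exists y : point, exists z : point,
     (L == [set x; y; z]) && (x + y + z == 0)].

Definition is_cap (S : {set point}) : Prop :=
  forall L : {set point}, is_line L -> ~ (L \subset S).

Definition is_hyperplane (H : {set point}) : Prop :=
  exists (p : point) (V : 'M['F_3]_4),
    \rank V = 3%N /\ H = [set x : point | (x - p <= V)%MS].

Definition cohyperplanar (S : {set point}) : Prop :=
  exists H : {set point}, is_hyperplane H /\ S \subset H.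

Definition is_aline (a : point) (P : {set point}) : Prop :=
  exists b c : point, b != c /\ P = [set b; c] /\ is_line [set a; b; c].

Definition is_demicap (a : point) (D : {set point}) : Prop :=
  is_cap D /\
  exists S : {set {set point}},
    #|S| = 5%N /\ (forall P, P \in S -> is_aline a P) /\
    D = cover S /\ #|D| = 10%N /\
    (forall T : {set {set point}}, T \subset S -> #|T| = 4%N ->
       ~ cohyperplanar (cover T)).

Definition ncomplete (S : {set point}) (p : point) : nat :=
  #|[set P : {set point} | [&& P \subset S, #|P| == 2%N & is_line (p |: P)]]|.

(* Main.v *)
Require Import Defs.
From mathcomp Require Import all_boot all_order all_algebra.
From mathcomp Require Import ring.
Import GRing.Theory.
Local Open Scope ring_scope.

Lemma F3c (u : 'F_3) : u + u + u = 0.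
Proof. case: u => [[|[|[|n]]] Hn]; apply/val_inj => //=. Qed.

Lemma pt3 (x : point) : x + x + x = 0.
Proof. apply/rowP => j; rewrite !mxE; exact: F3c. Qed.

Lemma ptN (x : point) : - x = x + x.
Proof. by apply/eqP; rewrite eq_sym -addr_eq0 pt3. Qed.

Lemma negE (x : point) : - x - x = x.
Proof. by rewrite -opprD -ptN opprK. Qed.

Lemma set3E (x y z : point) : [set x; y; z] = x |: [set y; z].
Proof. by apply/setP => u; rewrite !inE orbA. Qed.

Lemma pdist (x y z : point) : x != y -> x + y + z = 0 -> x != z /\ y != z.
Proof.
move=> xy s; split; apply/eqP => E; move: s; rewrite -E => s.
- have : y = x.
    have h : (x + x) + y = 0 by rewrite -s addrAC.
    have e : y = - (x + x) by apply/eqP; rewrite -addr_eq0 addrC h.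
    by rewrite e -ptN opprK.
  by move=> yx; move: xy; rewrite yx eqxx.
- have : x = y.
    have h : (y + y) + x = 0 by rewrite -s addrC addrA.
    have e : x = - (y + y) by apply/eqP; rewrite -addr_eq0 addrC h.
    by rewrite e -ptN opprK.
  by move=> yx; move: xy; rewrite yx eqxx.
Qed.

Lemma card3 (x y z : point) : #|[set x; y; z]| = 3%N -> [/\ x != y, x != z & y != z].
Proof.
rewrite set3E cardsU1 cards2 !inE.
case: (eqVneq x y) => [->|xy] /=; first by case: (y != z).
case: (eqVneq x z) => [E|xz] /=; first by subst; case: (y != z).
by case: (y != z).
Qed.

Lemma card3' (x y z : point) : [/\ x != y, x != z & y != z] -> #|[set x; y; z]| = 3%N.
Proof. by case=> xy xz yz; rewrite set3E cardsU1 cards2 !inE (negbTE xy) (negbTE xz) yz. Qed.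

Lemma sum2 (x y : point) : x != y -> \sum_(u in [set x; y]) u = x + y.
Proof. by move=> xy; rewrite big_setU1 ?inE // big_set1. Qed.

Lemma sum3 (x y z : point) : [/\ x != y, x != z & y != z] ->
  \sum_(u in [set x; y; z]) u = x + y + z.
Proof.
case=> xy xz yz; rewrite set3E big_setU1; last by rewrite !inE negb_or xy xz.
rewrite sum2 //; exact: addrA.
Qed.

Lemma line_iff (x y z : point) :
  is_line [set x; y; z] <-> [/\ x != y, x != z, y != z & x + y + z = 0].
Proof.
split.
- case/andP => /eqP c3 /existsP[x' /existsP [y' /existsP[z' /andP[/eqP E /eqP s]]]].
  have [xy xz yz] := card3 _ _ _ c3.
  have d' : [/\ x' != y', x' != z' & y' != z'] by apply: (card3 x' y' z'); rewrite -E.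
  split => //; rewrite -sum3 // E sum3 //.
- case=> xy xz yz s; apply/andP; split; first by rewrite card3'.
  by apply/existsP; exists x; apply/existsP; exists y; apply/existsP; exists z; rewrite s !eqxx.
Qed.

Lemma line_pair (p x y : point) : x != y ->
  is_line (p |: [set x; y]) <-> p + x + y = 0.
Proof.
move=> xy; rewrite -set3E line_iff; split; first by case.
move=> s.
have s' : x + y + p = 0 by rewrite -s addrC addrA.
have [xp yp] := pdist _ _ _ xy s'.
by split => //; rewrite eq_sym.
Qed.


Definition sgF (s : bool) : 'F_3 := if s then 1 else -1.
Definition kapB (b1 b2 b3 b4 s1 s2 s3 s4 : bool) : 'F_3 :=
  b1%:R * sgF s1 + b2%:R * sgF s2 - b3%:R * sgF s3 - b4%:R * sgF s4.
Definition kapN (b1 b2 b3 b4 s1 s2 s3 s4 : bool) : nat :=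
  ((b1 * (if s1 then 1 else 2) + b2 * (if s2 then 1 else 2)
   + b3 * (if s3 then 2 else 1) + b4 * (if s4 then 2 else 1)) %% 3)%N.
Lemma kapE b1 b2 b3 b4 s1 s2 s3 s4 :
  (kapB b1 b2 b3 b4 s1 s2 s3 s4 == 0) = (kapN b1 b2 b3 b4 s1 s2 s3 s4 == 0%N).
Proof. by case: b1; case: b2; case: b3; case: b4; case: s1; case: s2; case: s3; case: s4. Qed.

Definition I5 := iota 0 5.
Definition BB := [:: true; false].
Definition forall4 (P : nat -> nat -> nat -> nat -> bool -> bool -> bool -> bool -> bool) :=
  all (fun i1 => all (fun i2 => all (fun i3 => all (fun i4 =>
  all (fun s1 => all (fun s2 => all (fun s3 => all (fun s4 =>
    P i1 i2 i3 i4 s1 s2 s3 s4) BB) BB) BB) BB) I5) I5) I5) I5.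

Definition chk1 := forall4 (fun i1 i2 i3 i4 s1 s2 s3 s4 =>
   has (fun k => kapN (i1 == k) (i2 == k) (i3 == k) (i4 == k) s1 s2 s3 s4 == 0%N) I5).
Definition chk2 := forall4 (fun i1 i2 i3 i4 s1 s2 s3 s4 =>
   (i1 != i2) ==> (i3 != i4) ==>
   all (fun k => kapN (i1 == k) (i2 == k) (i3 == k) (i4 == k) s1 s2 s3 s4 == 0%N) I5 ==>
   ([&& i1 == i3, s1 == s3, i2 == i4 & s2 == s4] ||
    [&& i1 == i4, s1 == s4, i2 == i3 & s2 == s3])).
Lemma chk1T : chk1. Proof. vm_compute; reflexivity. Qed.
Lemma chk2T : chk2. Proof. vm_compute; reflexivity. Qed.


Lemma indep (a : point) (S : {set {set point}}) (d : 'I_5 -> point)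
  (Pi : 'I_5 -> {set point}) :
  (forall i, Pi i \in S) -> (forall P, P \in S -> exists i, P = Pi i) ->
  (forall i x, x \in Pi i -> x - a = d i \/ x - a = - d i) ->
  (forall T : {set {set point}}, T \subset S -> #|T| = 4%N -> ~ cohyperplanar (cover T)) ->
  #|S| = 5%N ->
  forall (c : 'I_5 -> 'F_3) k, c k = 0 -> \sum_i c i *: d i = 0 -> forall i, c i = 0.
Proof.
move=> PiS Psurj Pd nocoh S5 c k ck rel i.
apply/eqP; apply/negPn/negP => ci0.
have ik : k != i by apply: contraNneq ci0 => <-; rewrite ck.
have [j0 ij0 _] := unlift_some ik.
pose M : 'M['F_3]_4 := \matrix_(j < 4) d (lift k j).
pose u : 'rV['F_3]_4 := \row_(j < 4) c (lift k j).
have uM : u *m M = 0.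
  have e : u *m M = \sum_(j < 4) c (lift k j) *: d (lift k j).
    by rewrite mulmx_sum_row; apply: eq_bigr => j _; rewrite rowK mxE.
  by rewrite e; move: rel; rewrite (bigD1_ord k) //= ck scale0r add0r.
have u0 : u != 0.
  by apply/negP => /eqP/rowP/(_ j0); rewrite !mxE -ij0; apply/eqP.
have nf : ~~ row_free M.
  by apply: contra u0 => fM; rewrite -(mulmx_free_eq0 _ fM) uM.
have rM : (\rank M < 4)%N.
  by rewrite ltn_neqAle rank_leq_col andbT.
pose C := cokermx M.
have C0 : C != 0.
  apply/negP => /eqP C0; move: (mxrank_coker M); rewrite -/C C0 mxrank0.
  by move/eqP; rewrite eq_sym subn_eq0 leqNgt rM.
have [j Cj] : exists j, col j C != 0.
  apply/existsP; apply: contraR C0 => /existsPn H; apply/eqP/matrixP => r s.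
  by move: (H s); rewrite negbK => /eqP/colP/(_ r); rewrite !mxE.
pose V := kermx (col j C).
have rV3 : \rank V = 3%N.
  by rewrite mxrank_ker -mxrank_tr rank_rV trmx_eq0 Cj.
have dV : forall j', (d (lift k j') <= V)%MS.
  move=> j'; rewrite sub_kermx.
  have -> : d (lift k j') = row j' M by rewrite rowK.
  by rewrite colE mulmxA -row_mul mulmx_coker row0 mul0mx.
apply: (nocoh (S :\ Pi k)).
- exact: subD1set.
- by move: (cardsD1 (Pi k) S); rewrite PiS S5 add1n => -[].
exists [set x : point | (x - a <= V)%MS]; split.
  by exists a, V.
apply/subsetP => x /bigcupP [Q]; rewrite !inE => /andP [QPk QS] xQ.
have [i' Qi'] := Psurj Q QS.
have ki' : k != i' by apply: contraNneq QPk => ->; rewrite Qi'.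
have [j' ij' _] := unlift_some ki'.
rewrite Qi' in xQ; case: (Pd _ _ xQ) => ->; rewrite ?eqmx_opp ij'; exact: dV.
Qed.


Lemma ncE (D : {set point}) (p : point) :
  ncomplete D p = #|[set P : {set point} | [&& P \subset D, #|P| == 2%N & - \sum_(u in P) u == p]]|.
Proof.
rewrite /ncomplete; apply: eq_card => P; rewrite !inE.
case: (P \subset D) => //=; apply: andb_id2l => /cards2P [x [y [xy ->]]].
rewrite sum2 // eq_sym -addr_eq0 addrA.
by apply/idP/eqP => [/(line_pair p x y xy)|/(line_pair p x y xy)].
Qed.

Lemma relE (a x1 x2 x3 x4 : point) : (a + x1) + (a + x2) = (a + x3) + (a + x4) ->
  x1 + x2 - x3 - x4 = 0.
Proof.
move=> h; apply/rowP => r; move/rowP/(_ r): h; rewrite !mxE => h.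
have : (a 0 r + x1 0 r + (a 0 r + x2 0 r)) - (a 0 r + x3 0 r + (a 0 r + x4 0 r)) = 0.
  by rewrite h subrr.
by move=> <-; ring.
Qed.

Lemma flipE (a v : point) (s : bool) : - a - (a + sgF s *: v) = a + sgF (~~ s) *: v.
Proof.
rewrite opprD addrA negE; congr (_ + _).
by case: s; rewrite /sgF /= ?scaleN1r ?scale1r ?opprK.
Qed.

Lemma single (d : 'I_5 -> point) (j : 'I_5) (s : 'F_3) :
  \sum_(k < 5) (((j == k) : bool)%:R * s) *: d k = s *: d j.
Proof.
rewrite (bigD1 j) //= eqxx mul1r big1 ?addr0 // => k kj.
by rewrite eq_sym (negbTE kj) mul0r scale0r.
Qed.

Lemma chk1E (i1 i2 i3 i4 : nat) s1 s2 s3 s4 :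
  (i1 < 5)%N -> (i2 < 5)%N -> (i3 < 5)%N -> (i4 < 5)%N ->
  exists2 k, (k < 5)%N & kapN (i1 == k) (i2 == k) (i3 == k) (i4 == k) s1 s2 s3 s4 == 0%N.
Proof.
move=> h1 h2 h3 h4; have := chk1T; rewrite /chk1 /forall4.
have mI i : (i < 5)%N -> i \in I5 by rewrite /I5 mem_iota.
have mB s : s \in BB by case: s.
move=> /allP/(_ _ (mI _ h1))/allP/(_ _ (mI _ h2))/allP/(_ _ (mI _ h3))/allP/(_ _ (mI _ h4)).
move=> /allP/(_ _ (mB s1))/allP/(_ _ (mB s2))/allP/(_ _ (mB s3))/allP/(_ _ (mB s4)).
by case/hasP => k; rewrite /I5 mem_iota => /andP[_ k5] H; exists k.
Qed.

Lemma chk2E (i1 i2 i3 i4 : nat) s1 s2 s3 s4 :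
  (i1 < 5)%N -> (i2 < 5)%N -> (i3 < 5)%N -> (i4 < 5)%N ->
  i1 != i2 -> i3 != i4 ->
  (forall k, (k < 5)%N -> kapN (i1 == k) (i2 == k) (i3 == k) (i4 == k) s1 s2 s3 s4 == 0%N) ->
   ([&& i1 == i3, s1 == s3, i2 == i4 & s2 == s4] ||
    [&& i1 == i4, s1 == s4, i2 == i3 & s2 == s3]).
Proof.
move=> h1 h2 h3 h4 n12 n34 H; have := chk2T; rewrite /chk2 /forall4.
have mI i : (i < 5)%N -> i \in I5 by rewrite /I5 mem_iota.
have mB s : s \in BB by case: s.
move=> /allP/(_ _ (mI _ h1))/allP/(_ _ (mI _ h2))/allP/(_ _ (mI _ h3))/allP/(_ _ (mI _ h4)).
move=> /allP/(_ _ (mB s1))/allP/(_ _ (mB s2))/allP/(_ _ (mB s3))/allP/(_ _ (mB s4)).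
rewrite n12 n34 !implyTb => /implyP; apply; apply/allP => k; rewrite /I5 mem_iota => /andP[_ k5].
exact: H.
Qed.


Theorem corollary3p5 (a : point) (D : {set point}) :
  is_demicap a D ->
  [/\ a \notin D,
      ncomplete D a = 5%N,
      #|[set p : point | (p \notin D) && (ncomplete D p == 1%N)]| = 40%N
    & #|[set p : point | (p \notin D) && (ncomplete D p == 0%N)]| = 30%N].
Proof.
move=> [cap [S [S5 [Sal [DS [D10 nocoh]]]]]].
have alP : forall P, P \in S -> exists b c,
    [/\ P = [set b; c], b != c, a != b, a != c & a + b + c = 0].
  by move=> P /Sal [b [c [bc [-> /line_iff [ab ac _ s]]]]]; exists b, c.
pose Pi (i : 'I_5) : {set point} := enum_val (cast_ord (esym S5) i).
have PiS i : Pi i \in S by rewrite /Pi; apply: enum_valP.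
have Psurj P : P \in S -> exists i, P = Pi i.
  move=> PS; exists (cast_ord S5 (enum_rank_in PS P)).
  by rewrite /Pi cast_ordK enum_rankK_in.
pose g i := odflt a [pick b in Pi i].
have gP i : [/\ Pi i = [set g i; -a - g i], g i != -a - g i, a != g i & a != -a - g i].
  have [b [c [E bc ab ac s]]] := alP _ (PiS i).
  have cE : c = -a - b.
    by apply/eqP; rewrite -opprD -addr_eq0 addrC; apply/eqP.
  have bE : b = -a - c.
    by apply/eqP; rewrite -opprD -addr_eq0 addrCA addrA; apply/eqP.
  rewrite /g; case: pickP => [x | H]; last by move: (H b); rewrite E !inE eqxx.
  rewrite E !inE => /orP [] /eqP -> /=.
  - by rewrite -cE.
  - by rewrite -bE setUC eq_sym.
pose d i := g i - a.
pose E (al : 'I_5 * bool) := a + sgF al.2 *: d al.1.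
have ET i : E (i, true) = g i by rewrite /E /= scale1r addrC subrK.
have EF i : E (i, false) = -a - g i.
  by rewrite /E /= scaleN1r opprB addrA -ptN.
have PiE i : Pi i = [set E (i, true); E (i, false)] by rewrite ET EF; case: (gP i).
have memD x : (x \in D) = [exists i, x \in Pi i].
  rewrite DS /cover; apply/bigcupP/existsP => [[P PS xP]|[i xi]].
    by have [i Pe] := Psurj P PS; exists i; rewrite -Pe.
  by exists (Pi i).
have DE x : x \in D -> exists al, x = E al.
  by rewrite memD => /existsP [i]; rewrite PiE !inE => /orP [] /eqP ->; eexists.
have Pd i x : x \in Pi i -> x - a = d i \/ x - a = - d i.
  rewrite PiE !inE => /orP [] /eqP ->; [left|right];
    by rewrite /E /= ?scale1r ?scaleN1r addrC addKr.
have IND := indep a S d Pi PiS Psurj Pd nocoh S5.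
have aD : a \notin D.
  rewrite memD; apply/existsPn => i; case: (gP i) => -> _ ab ac.
  by rewrite !inE negb_or ab ac.
have pairS i s : [set E (i, s); E (i, ~~ s)] \in S.
  by case: s; rewrite /= -?PiE ?PiS // setUC -PiE PiS.
pose Pairs := [set P : {set point} | (P \subset D) && (#|P| == 2%N)].
have PairsP P : (P \in Pairs) = (P \subset D) && (#|P| == 2%N) by rewrite inE.
have Pairs45 : #|Pairs| = 45%N by rewrite cards_draws D10.
clearbody Pairs.
pose hP (P : {set point}) := - \sum_(u in P) u.
have ncE' p : ncomplete D p = #|[set P in Pairs | hP P == p]|.
  by rewrite ncE; apply: eq_card => P; rewrite !inE PairsP andbA.
have PairsE P : P \in Pairs -> exists x y, [/\ x != y, P = [set x; y], x \in D & y \in D].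
  rewrite PairsP => /andP [sD /cards2P [x [y [xy Pe]]]]; exists x, y; split => //.
    by apply: (subsetP sD); rewrite Pe !inE eqxx.
  by apply: (subsetP sD); rewrite Pe !inE eqxx orbT.
have hPnD P : P \in Pairs -> hP P \notin D.
  move=> /PairsE [x [y [xy -> xD yD]]]; apply/negP => zD.
  apply: (cap (hP [set x; y] |: [set x; y])).
    by apply/(line_pair _ _ _ xy); rewrite /hP sum2 // -addrA addNr.
  by apply/subsetP => u; rewrite !inE => /orP [/eqP -> // | /orP [] /eqP ->].
have SPairs P : P \in S -> P \in Pairs.
  move=> /Psurj [i ->]; case: (gP i) => -> gn _ _.
  rewrite PairsP cards2 gn andbT; apply/subsetP => x xP.
  by rewrite memD; apply/existsP; exists i; case: (gP i) => ->.
have hPS P : P \in Pairs -> (hP P == a) = (P \in S).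
  move=> PP; apply/eqP/idP => [|/Psurj [i ->]].
    move: PP => /PairsE [x [y [xy -> xD yD]]]; rewrite /hP sum2 // => h.
    have ye : y = -a - x by rewrite -h opprK addrC addKr.
    have [[i s] xe] := DE x xD.
    by rewrite ye xe /E flipE -/(E (i, ~~ s)) -/(E (i, s)) pairS.
  case: (gP i) => -> gn _ _; rewrite /hP sum2 //.
  by rewrite addrCA subrr addr0 opprK.
have hinj : {in Pairs :\: S &, injective hP}.
  move=> P Q; rewrite !inE => /andP [PnS PP] /andP [QnS QP] h.
  move: PP QP PnS QnS h => /PairsE [x [y [xy -> xD yD]]] /PairsE [u [v [uv -> uD vD]]].
  have [[i1 s1] xe] := DE x xD; have [[i2 s2] ye] := DE y yD.
  have [[i3 s3] ue] := DE u uD; have [[i4 s4] ve] := DE v vD.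
  subst x y u v => PnS QnS h.
  have ne1 : i1 != i2.
    apply: contraNneq PnS => e; subst i2.
    case: (eqVneq s1 s2) => [es|ns]; first by subst s2; rewrite eqxx in xy.
    have -> : s2 = ~~ s1 by move: ns; case: (s1); case: (s2).
    exact: pairS.
  have ne2 : i3 != i4.
    apply: contraNneq QnS => e; subst i4.
    case: (eqVneq s3 s4) => [es|ns]; first by subst s4; rewrite eqxx in uv.
    have -> : s4 = ~~ s3 by move: ns; case: (s3); case: (s4).
    exact: pairS.
  rewrite /hP !sum2 // in h; move/oppr_inj: h => h.
  have rel : \sum_(k < 5) kapB (i1 == k) (i2 == k) (i3 == k) (i4 == k) s1 s2 s3 s4 *: d k = 0.
    rewrite /kapB; under eq_bigr => k _ do rewrite !scalerBl !scalerDl.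
    rewrite !sumrB big_split /= !single.
    exact: (relE a _ _ _ _ h).
  have [k0 k05 hk0] := chk1E i1 i2 i3 i4 s1 s2 s3 s4 (ltn_ord i1) (ltn_ord i2) (ltn_ord i3) (ltn_ord i4).
  have allz := IND (fun k => kapB (i1 == k) (i2 == k) (i3 == k) (i4 == k) s1 s2 s3 s4)
    (Ordinal k05) (eqP (etrans (kapE _ _ _ _ _ _ _ _) hk0)) rel.
  have := chk2E i1 i2 i3 i4 s1 s2 s3 s4 (ltn_ord i1) (ltn_ord i2) (ltn_ord i3) (ltn_ord i4) ne1 ne2
    (fun k k5 => etrans (esym (kapE _ _ _ _ _ _ _ _)) (introT eqP (allz (Ordinal k5)))).
  case/orP => /and4P [/eqP e1 /eqP e2 /eqP e3 /eqP e4].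
    by rewrite (val_inj e1) (val_inj e3) e2 e4.
  by rewrite (val_inj e1) (val_inj e3) e2 e4 setUC.
have SsubP : S \subset Pairs by apply/subsetP => P; exact: SPairs.
pose I := [set hP P | P in Pairs :\: S].
have I40 : #|I| = 40%N.
  by rewrite card_in_imset // cardsD (setIidPr SsubP) Pairs45 S5.
have nca : ncomplete D a = 5%N.
  rewrite ncE' -S5; apply: eq_card => P; rewrite !inE.
  case PP: (P \in Pairs) => /=; first by rewrite hPS.
  by apply/esym/negbTE; apply: contraFN PP; exact: SPairs.
have ID p : p \in I -> p \notin D.
  by case/imsetP => P; rewrite inE => /andP [_ PP] ->; exact: hPnD.
have Ia : a \notin I.
  apply/imsetP => -[P]; rewrite inE => /andP [PnS PP] /esym/eqP.
  by rewrite hPS // (negbTE PnS).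
have ncI p : p \in I -> ncomplete D p = 1%N.
  case/imsetP => P0; rewrite inE => /andP [P0nS P0P] ->.
  rewrite ncE'; transitivity #|[set P0]|; last exact: cards1.
  apply: eq_card => P; rewrite !inE.
  apply/andP/eqP => [[PP /eqP h]|->]; last by rewrite P0P eqxx.
  apply: hinj => //; rewrite inE ?P0nS ?P0P // PP andbT.
  by apply: contraNN P0nS => PS; rewrite -hPS // -h hPS.
have ncNI p : p != a -> p \notin I -> ncomplete D p = 0%N.
  move=> pa pI; rewrite ncE'; apply/eqP; rewrite cards_eq0; apply/eqP/setP => P.
  rewrite !inE; apply/negbTE/andP => -[PP /eqP h].
  case PS: (P \in S).
    by move: pa; rewrite -h; move: (hPS P PP); rewrite PS => /eqP ->; rewrite eqxx.
  by move: pI; rewrite -h; apply/negP/negPn/imsetP; exists P; rewrite // inE PS PP.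
have cardT : #|point| = 81%N.
  by rewrite card_mx card_Fp.
split => //.
- rewrite -I40; apply: eq_card => p; rewrite !inE.
  case pI: (p \in I); first by rewrite ID // ncI.
  case: (boolP (p \in D)) => //= pD.
  case: (eqVneq p a) => [->|pa]; first by rewrite nca.
  by rewrite ncNI // pI.
- have -> : [set p : point | (p \notin D) && (ncomplete D p == 0%N)] = ~: (D :|: (a |: I)).
    apply/setP => p; rewrite !inE !negb_or.
    case: (boolP (p \in D)) => //= pD.
    case: (eqVneq p a) => [->|pa] /=; first by rewrite nca.
    case pI: (p \in I); first by rewrite ncI.
    by rewrite ncNI // pI.
  have dj : D :&: (a |: I) = set0.
    apply/setP => p; rewrite !inE; case: (boolP (p \in D)) => //= pD.
    case: (eqVneq p a) => [e|pa] /=; first by rewrite e in pD; rewrite (negbTE aD) in pD.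
    by apply/negbTE; apply: contraL pD => /ID.
  move: (cardsC (D :|: (a |: I))); rewrite cardT cardsU dj cards0 subn0 cardsU1 Ia I40 D10.
  by move=> H; apply/(@addnI 51); exact: H.
Qed.
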